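(* Let $X$ be a nonempty set, $\sigma(X)$ an algebra on $X$, $z_1\neq z_2$ complex numbers, and $f:\sigma(X)\to\{z_1,z_2\}$ a surjection such that $f(A)+f(B)=f(A\cup B)+f(A\cap B)$ for all $A,B\in\sigma(X)$. Then: (1) for each $A\in\sigma(X)$, $\{f(A),f(X\setminus A)\}=\{z_1,z_2\}$ (in particular $f(\varnothing)\ne f(X)$); (2) if $Y\in f^{-1}(f(\varnothing))$ and $A\in\sigma(X)$ with $A\subseteq Y$, then $A\in f^{-1}(f(\varnothing))$; and if $U\in f^{-1}(f(X))$ and $V\in\sigma(X)$ with $U\subseteq V$, then $V\in f^{-1}(f(X))$; (3) each of $f^{-1}(z_1)$ and $f^{-1}(z_2)$ is closed under finite intersections and finite unions.
   Context: An algebra $\sigma(X)$ on a nonempty set $X$ is a family of subsets of $X$ containing $\varnothing$ and $X$ and closed under finite unions and complements (hence also under finite intersections). *)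

(* Defs.v *)
From Stdlib Require Import Reals.
Open Scope R_scope.

Definition Cpx : Type := (R * R)%type.
Definition Cadd (z w : Cpx) : Cpx := (fst z + fst w, snd z + snd w).

Definition set0 {X : Type} : X -> Prop := fun _ => False.
Definition setT {X : Type} : X -> Prop := fun _ => True.
Definition setU {X : Type} (A B : X -> Prop) : X -> Prop := fun x => A x \/ B x.
Definition setI {X : Type} (A B : X -> Prop) : X -> Prop := fun x => A x /\ B x.
Definition setC {X : Type} (A : X -> Prop) : X -> Prop := fun x => ~ A x.
Definition subset {X : Type} (A B : X -> Prop) : Prop := forall x, A x -> B x.

Definition is_algebra {X : Type} (S : (X -> Prop) -> Prop) : Prop :=
  S set0 /\ S setT /\
  (forall A B, S A -> S B -> S (setU A B)) /\
  (forall A, S A -> S (setC A)).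

(* Main.v *)
Require Import Defs.
From Stdlib Require Import Reals Lra Classical FunctionalExtensionality PropExtensionality.

Lemma set_ext {X : Type} (A B : X -> Prop) : (forall x, A x <-> B x) -> A = B.
Proof. intro H; apply functional_extensionality; intro x; apply propositional_extensionality; auto. Qed.

Lemma pair_lemma (z1 z2 a b c d : Cpx) : z1 <> z2 ->
  (a = z1 \/ a = z2) -> (b = z1 \/ b = z2) -> (c = z1 \/ c = z2) -> (d = z1 \/ d = z2) ->
  Cadd a b = Cadd c d -> (a = c /\ b = d) \/ (a = d /\ b = c).
Proof.
  intros hz ha hb hc hd E.
  destruct ha, hb, hc, hd; subst; auto;
  exfalso; apply hz; destruct z1 as [p q], z2 as [r s]; unfold Cadd in E; simpl in E;
  injection E; intros; f_equal; lra.
Qed.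

Theorem lemma3 (X : Type) (S : (X -> Prop) -> Prop) (z1 z2 : Cpx)
  (f : (X -> Prop) -> Cpx)
  (hX : inhabited X)
  (hS : is_algebra S)
  (hz : z1 <> z2)
  (hrange : forall A, S A -> f A = z1 \/ f A = z2)
  (hsurj1 : exists A, S A /\ f A = z1)
  (hsurj2 : exists A, S A /\ f A = z2)
  (hmod : forall A B, S A -> S B ->
            Cadd (f A) (f B) = Cadd (f (setU A B)) (f (setI A B))) :
  (* (1) *)
  (forall A, S A ->
     (f A = z1 /\ f (setC A) = z2) \/ (f A = z2 /\ f (setC A) = z1)) /\
  f set0 <> f setT /\
  (* (2) *)
  (forall Y A, S Y -> f Y = f set0 -> S A -> subset A Y -> f A = f set0) /\
  (forall U V, S U -> f U = f setT -> S V -> subset U V -> f V = f setT) /\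
  (* (3) *)
  (forall z, (z = z1 \/ z = z2) ->
     forall A B, S A -> f A = z -> S B -> f B = z ->
       f (setU A B) = z /\ f (setI A B) = z).
Proof.
  destruct hS as [h0 [hT [hU hC]]].
  assert (M : forall A B, S A -> S B ->
    (f A = f (setU A B) /\ f B = f (setI A B)) \/ (f A = f (setI A B) /\ f B = f (setU A B))).
  { intros A B HA HB.
    assert (SI : S (setI A B)).
    { replace (setI A B) with (setC (setU (setC A) (setC B))) by
        (apply set_ext; intro x; unfold setI, setU, setC; split;
         [intro h; split; apply NNPP; tauto | tauto]).
      auto. }
    apply (pair_lemma z1 z2); auto. }
  assert (UC : forall A : X -> Prop, setU A (setC A) = setT).
  { intro A; apply set_ext; intro x; unfold setU, setC, setT; split; auto; intros _; apply classic. }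
  assert (IC : forall A : X -> Prop, setI A (setC A) = set0).
  { intro A; apply set_ext; intro x; unfold setI, setC, set0; split; tauto. }
  assert (MC : forall A, S A -> (f A = f setT /\ f (setC A) = f set0) \/ (f A = f set0 /\ f (setC A) = f setT)).
  { intros A HA. pose proof (M A (setC A) HA (hC A HA)) as H. rewrite UC, IC in H. exact H. }
  assert (N : f set0 <> f setT).
  { intro E. destruct (hrange set0 h0) as [e|e].
    - destruct hsurj2 as [A [HA FA]]. destruct (MC A HA) as [[u _]|[u _]]; congruence.
    - destruct hsurj1 as [A [HA FA]]. destruct (MC A HA) as [[u _]|[u _]]; congruence. }
  assert (P1 : forall Y A, S Y -> f Y = f set0 -> S A -> subset A Y -> f A = f set0).
  { intros Y A HY FY HA sub.
    assert (E : setI A (setC Y) = set0) by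
      (apply set_ext; intro x; unfold setI, setC, set0; split; [intros [h1 h2]; apply h2, sub, h1| tauto]).
    destruct (MC Y HY) as [[u v]|[u v]]; [congruence|].
    destruct (MC A HA) as [[p q]|[p q]]; [|exact p].
    exfalso. apply N.
    destruct (M A (setC Y) HA (hC Y HY)) as [[r w]|[r w]]; rewrite E in *; congruence. }
  split; [|split; [exact N|split; [exact P1|split]]].
  - intros A HA. destruct (MC A HA) as [[u v]|[u v]];
    destruct (hrange set0 h0) as [e|e], (hrange setT hT) as [t|t]; try congruence;
    [right|left|left|right]; split; congruence.
  - intros U V HU FU HV sub. destruct (hrange V HV) as [a|a], (hrange setT hT) as [t|t]; try congruence;
    destruct (hrange set0 h0) as [e|e]; try congruence;
    exfalso; apply N; rewrite <- (P1 V U HV ltac:(congruence) HU sub); congruence.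
  - intros z hzz A B HA FA HB FB.
    destruct (M A B HA HB) as [[u v]|[u v]]; split; congruence.
Qed.
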